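(* For all integers $t,k>3$ satisfying $(2t)^k-1<t^k(2t-1)$, there exists a simple undirected graph $U$ with $t^k$ vertices, minimum degree at least $2$ and diameter $k$, such that every directed graph $G$ with $U(G)=U$ is an equilibrium graph in the MAX version of the bounded budget network creation game whose budgets are the outdegrees of the vertices of $G$.
   Context: Bounded budget network creation game $(b_1,\dots,b_n)$-BG: $n$ players with integer budgets $0\le b_i\le n-1$. A strategy of player $i$ is a set $S_i\subseteq\{1,\dots,n\}\setminus\{i\}$ with $|S_i|=b_i$; a profile is realized by the directed graph $G$ on $u_1,\dots,u_n$ with an arc $\overrightarrow{u_iu_j}$ iff $j\in S_i$. Thus a directed graph $G$ (without loops) in which vertex $u_i$ has outdegree $b_i$ is a realization of $(b_1,\dots,b_n)$-BG. $U(G)$ is the undirected multigraph obtained by ignoring arc directions. $\operatorname{dist}(u,v)$ is the distance in $U(G)$, defined as $n^2$ between different components. MAX cost: $c_{MAX}(u)=\max_v\operatorname{dist}(u,v)+(\kappa-1)n^2$, $\kappa$ the number of components of $U(G)$. An equilibrium graph in the MAX version is a realization in which no vertex can decrease its MAX cost by changing its own strategy while the other strategies are fixed. *)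

(* Defs.v *)
From mathcomp Require Import all_boot.
Set Implicit Arguments. Unset Strict Implicit. Unset Printing Implicit Defensive.

Section BBNCG.
Variable n : nat.
Implicit Types (a e : rel 'I_n) (x y u : 'I_n).

(* Undirected adjacency of U(a): u ~ v iff an arc in either direction
   (parallel arcs of the multigraph do not affect distances). *)
Definition uadj a : rel 'I_n := fun x y => a x y || a y x.

Fixpoint within a (k : nat) x y : bool :=
  if k is k'.+1 then within a k' x y || [exists z, within a k' x z && uadj a z y]
  else x == y.

(* dist in U(a): the least k with within a k x y (any shortest walk has
   length < n), and n^2 between different components. *)
Definition dist a x y : nat :=
  let d := find (fun k => within a k x y) (iota 0 n) in
  if d < n then d else n ^ 2.

Definition ncomp a : nat := #|[set [set y | within a n x y] | x : 'I_n]|.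

Definition cMAX a u : nat := \max_(v : 'I_n) dist a u v + (ncomp a - 1) * n ^ 2.

Definition outdeg a u : nat := #|[set v | a u v]|.

Definition deviate a u (S : {set 'I_n}) : rel 'I_n :=
  fun x y => if x == u then y \in S else a x y.

(* equilibrium graph in the MAX version of the game whose budgets are
   the outdegrees of a (a must be loopless to be a realization). *)
Definition MAX_equilibrium a : Prop :=
  (forall x, ~~ a x x) /\
  forall u (S : {set 'I_n}), u \notin S -> #|S| = outdeg a u ->
    cMAX a u <= cMAX (deviate a u S) u.

Definition simple_graph e : Prop := symmetric e /\ irreflexive e.

Definition min_degree_ge e (d : nat) : Prop := forall v, d <= #|[set w | e v w]|.

Definition diameter e : nat := \max_(x : 'I_n) \max_(y : 'I_n) dist e x y.

(* U(a) = e : for every pair, the number of arcs between x and y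
   (counted with multiplicity, both directions) equals the number of
   edges of e between them. *)
Definition underlying_is a e : Prop :=
  forall x y, (a x y : nat) + (a y x : nat) = (e x y : nat) /\ (x == y -> ~~ a x y).

End BBNCG.

(* Main.v *)
Require Import Defs.
From mathcomp Require Import all_boot zify.
Set Implicit Arguments. Unset Strict Implicit. Unset Printing Implicit Defensive.

Lemma lt_mix A B P Q : A < P -> B < Q -> A * Q + B < P * Q.
Proof.
move=> h1 h2; apply: (@leq_trans (A * Q + Q)); first by rewrite ltn_add2l.
by rewrite -mulSnr leq_mul2r h1 orbT.
Qed.

Lemma key_shift t x y i j : 0 < t -> y < t ^ (i + j + 1) ->
  ((x %% t ^ j) * t ^ (i + 1) + y %/ t ^ j) %/ t =
  ((x %% t ^ (j + 1)) * t ^ i + y %/ t ^ (j + 1)) %% t ^ (j + i).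
Proof.
move=> t0 hy.
have tp : forall m, 0 < t ^ m by move=> m; rewrite expn_gt0 t0.
have h1 : x %% t ^ j < t ^ j by rewrite ltn_mod tp.
have h2 : y %/ t ^ (j + 1) < t ^ i.
  rewrite ltn_divLR ?tp // -expnD; congr (_ < t ^ _): hy; lia.
have eL : (x %% t ^ j) * t ^ (i + 1) + y %/ t ^ j =
          ((x %% t ^ j) * t ^ i) * t + y %/ t ^ j by rewrite expnD expn1 mulnA.
have eD : y %/ t ^ j %/ t = y %/ t ^ (j + 1) by rewrite -divnMA expnD expn1.
rewrite eL divnMDl // eD.
have eX : x %% t ^ (j + 1) = (x %% t ^ (j + 1)) %/ t ^ j * t ^ j + x %% t ^ j.
  rewrite {1}(divn_eq (x %% t ^ (j + 1)) (t ^ j)) modn_dvdm //.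
  by rewrite expnD dvdn_mulr.
rewrite eX mulnDl -mulnA -expnD -addnA modnMDl; symmetry; apply: modn_small.
rewrite (expnD t j i); move: h1 h2.
exact: lt_mix.
Qed.

Lemma z_lt t x y i k : 0 < t -> i <= k -> y < t ^ k ->
  (x %% t ^ (k - i)) * t ^ i + y %/ t ^ (k - i) < t ^ k.
Proof.
move=> t0 ik hy.
have tp : forall m, 0 < t ^ m by move=> m; rewrite expn_gt0 t0.
have h1 : x %% t ^ (k - i) < t ^ (k - i) by rewrite ltn_mod tp.
have h2 : y %/ t ^ (k - i) < t ^ i.
  by rewrite ltn_divLR ?tp // -expnD subnKC.
have -> : t ^ k = t ^ (k - i) * t ^ i by rewrite -expnD subnK.
move: h1 h2.
exact: lt_mix.
Qed.

Lemma geom c m : c * (\sum_(i < m) c.+1 ^ i) + 1 = c.+1 ^ m.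
Proof.
elim: m => [|m IH]; first by rewrite big_ord0 muln0 expn0.
rewrite big_ord_recr /= mulnDr expnS; by rewrite addnAC IH mulSn.
Qed.

Lemma geom_lt t k : 0 < t -> (2 * t) ^ k - 1 < t ^ k * (2 * t - 1) ->
  \sum_(i < k) (2 * t) ^ i < t ^ k.
Proof.
move=> t0 h.
have e : 2 * t = (2 * t - 1).+1 by lia.
have := geom (2 * t - 1) k; rewrite -e => g.
rewrite -g addnK mulnC in h.
by rewrite -(ltn_pmul2r (_ : 0 < 2 * t - 1)) //; lia.
Qed.

Section Gen.
Variable n : nat.
Implicit Types (a : rel 'I_n).

Lemma within_mono a r s x y : within a r x y -> r <= s -> within a s x y.
Proof.
move=> h; elim: s => [|s IH]; first by rewrite leqn0 => /eqP <-.
rewrite leq_eqVlt => /orP[/eqP <- //|]; rewrite ltnS => /IH /= ->; by [].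
Qed.

Lemma within_ext a b : (forall x y, uadj a x y = uadj b x y) ->
  forall r x y, within a r x y = within b r x y.
Proof.
move=> h; elim=> [//|r IH] x y /=; rewrite IH; congr (_ || _).
by apply: eq_existsb => z; rewrite IH h.
Qed.

Lemma dist_le a r x y : within a r x y -> r < n -> dist a x y <= r.
Proof.
move=> hw hr; rewrite /dist.
set d := find _ _.
have hd : d <= r.
  rewrite leqNgt; apply/negP => /(before_find 0).
  by rewrite nth_iota // add0n hw.
by rewrite (leq_ltn_trans hd hr).
Qed.

Lemma dist_ge a k x y : 0 < k -> k <= n ^ 2 -> ~~ within a k.-1 x y -> k <= dist a x y.
Proof.
move=> k0 kn hw; rewrite /dist.
set d := find _ _.
case: ifP => // hd.
have : within a d x y.
  have hh : has (fun k => within a k x y) (iota 0 n) by rewrite has_find size_iota.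
  by have := nth_find 0 hh; rewrite nth_iota // add0n.
move=> hw'; rewrite leqNgt; apply/negP => dk.
have hd2 : d <= k.-1 by lia.
by move: hw; rewrite (within_mono hw' hd2).
Qed.

Definition nb a z := [set y | uadj a z y].
Definition ball a u r := [set v | within a r u v].

Lemma card_bigcup_le (I : finType) (S : {set I}) (X : I -> {set 'I_n}) :
  #|\bigcup_(z in S) X z| <= \sum_(z in S) #|X z|.
Proof.
elim/big_rec2: _ => [|i m A _ h]; first by rewrite cards0. apply: leq_trans (leq_card_setU _ _) _; exact: leq_add.
Qed.

Lemma ball_bound a u D :
  #|nb a u| <= D -> (forall z, #|nb a z| <= D.+1) ->
  forall r, #|ball a u r| <= \sum_(i < r.+1) D ^ i.
Proof.
move=> hu hz.
suff H : forall r, #|ball a u r| <= \sum_(i < r.+1) D ^ i /\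
                   #|ball a u r :\: ball a u r.-1| <= D ^ r.
  by move=> r; case: (H r).
elim=> [|r [IH1 IH2]].
  split; last by rewrite setDv cards0.
  rewrite big_ord_recr big_ord0 /= add0n expn0.
  apply: leq_trans (subset_leq_card (_ : _ \subset [set u])) _; last by rewrite cards1.
  by apply/subsetP => v; rewrite !inE eq_sym.
have H2 : #|ball a u r.+1 :\: ball a u r| <= D ^ r.+1.
  case: r IH1 IH2 => [|r] IH1 IH2.
    apply: leq_trans (subset_leq_card (_ : _ \subset nb a u)) _; last by rewrite expn1.
    apply/subsetP => v; rewrite !inE /= => /andP[hn /orP[/eqP e|/existsP[z /andP[/eqP <- ->]]]] //.
    by rewrite e eqxx in hn.
  set S := ball a u r.+1 :\: ball a u r.
  apply: (@leq_trans (#|\bigcup_(z in S) (nb a z :\: ball a u r)|)).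
    apply: subset_leq_card; apply/subsetP => v; rewrite !inE /= => /andP[hn /orP[h|/existsP[z /andP[hz1 hz2]]]];
      first by rewrite h in hn.
    apply/bigcupP; exists z.
      rewrite /S !inE /= hz1 andbT; apply/negP => hz3; case/negP: hn.
      by rewrite /=; apply/orP; right; apply/existsP; exists z; rewrite hz3 hz2.
    rewrite !inE hz2 andbT; apply/negP => hv; case/negP: hn.
    by rewrite /= hv.
  apply: leq_trans (card_bigcup_le _ _) _.
  apply: (@leq_trans (\sum_(z in S) D)).
    apply: leq_sum => z; rewrite /S !inE /= => /andP[hz1 /orP[h|/existsP[w /andP[hw1 hw2]]]].
      by rewrite h in hz1.
    have hwz : w \in nb a z by rewrite inE /uadj orbC.
    apply: (@leq_trans #|nb a z :\ w|).
      apply: subset_leq_card; apply/subsetP => y; rewrite !inE => /andP[hy1 ->].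
      rewrite andbT; apply: contraNneq hy1 => ->; exact: hw1.
    have := cardsD1 w (nb a z); rewrite hwz add1n => e.
    by have := hz z; rewrite e ltnS.
  by rewrite sum_nat_const expnSr; apply: leq_mul.
split=> //.
rewrite -(cardsID (ball a u r)) big_ord_recr /=.
apply: leq_add; last exact: H2.
apply: leq_trans (subset_leq_card (subsetIr _ _)) IH1.
Qed.

End Gen.

Section DB.
Variables t k : nat.
Hypothesis t3 : 3 < t.
Hypothesis k0 : 0 < k.
Local Notation n := (t ^ k).

Lemma t0 : 0 < t. Proof. lia. Qed.
Lemma n0 : 0 < n. Proof. by rewrite expn_gt0 t0. Qed.
Lemma tk : n = t ^ k.-1 * t. Proof. by rewrite -expnSr prednK. Qed.

Definition E (x y : 'I_n) := (val y %/ t == val x %% t ^ k.-1).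
Definition DB : rel 'I_n := fun x y => (x != y) && (E x y || E y x).

Lemma DB_sym : symmetric DB.
Proof. by move=> x y; rewrite /DB eq_sym orbC. Qed.

Lemma DB_simple : simple_graph DB.
Proof. by split; [exact: DB_sym | move=> x; rewrite /DB eqxx]. Qed.

Lemma uadj_DB x y : uadj DB x y = DB x y.
Proof. by rewrite /uadj DB_sym orbb. Qed.

Lemma card_val_sub (A : {set 'I_n}) (s : seq nat) :
  (forall x, x \in A -> val x \in s) -> #|A| <= size s.
Proof.
move=> h; rewrite cardE -(size_map val); apply: uniq_leq_size.
  by rewrite map_inj_uniq ?enum_uniq //; exact: val_inj.
by move=> v /mapP[x]; rewrite mem_enum => /h hx ->.
Qed.

Lemma DB_deg x : #|[set y | DB x y]| <= 2 * t.
Proof.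
pose s := [seq val x %% t ^ k.-1 * t + i | i <- iota 0 t] ++
          [seq i * t ^ k.-1 + val x %/ t | i <- iota 0 t].
have -> : 2 * t = size s by rewrite size_cat !size_map size_iota; lia.
apply: card_val_sub => y; rewrite inE /DB => /andP[_ /orP[]] /eqP h; rewrite mem_cat.
  apply/orP; left; apply/mapP; exists (val y %% t).
    by rewrite mem_iota add0n ltn_mod t0.
  by rewrite -h -divn_eq.
apply/orP; right; apply/mapP; exists (val y %/ t ^ k.-1).
  rewrite mem_iota add0n ltn_divLR ?expn_gt0 ?t0 // mulnC -tk; exact: ltn_ord.
by rewrite h -divn_eq.
Qed.

Lemma DB_mindeg : min_degree_ge DB 2.
Proof.
move=> x.
pose c := val x %% t ^ k.-1.
have hc : c < t ^ k.-1 by rewrite ltn_mod expn_gt0 t0.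
have hy : forall i, i < t -> c * t + i < n.
  by move=> i hi; rewrite tk; apply: lt_mix.
have t1 : 1 < t by lia.
have t2 : 2 < t by lia.
pose y0 := Ordinal (hy 0 t0); pose y1 := Ordinal (hy 1 t1); pose y2 := Ordinal (hy 2 t2).
have hE : forall i (hi : i < t), E x (Ordinal (hy i hi)).
  by move=> i hi; rewrite /E /= divnMDl ?t0 // divn_small // addn0.
have two : forall p q, p != q -> DB x p -> DB x q -> 2 <= #|[set y | DB x y]|.
  move=> p q pq hp hq; apply: (@leq_trans #|[set p; q]|); first by rewrite cards2 pq.
  apply: subset_leq_card.
  by apply/subsetP => z; rewrite !inE => /orP[] /eqP ->.
have d01 : y0 != y1 by apply/eqP => /(congr1 val) /=; lia.
have d02 : y0 != y2 by apply/eqP => /(congr1 val) /=; lia.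
have d12 : y1 != y2 by apply/eqP => /(congr1 val) /=; lia.
have hD : forall i (hi : i < t), x != Ordinal (hy i hi) -> DB x (Ordinal (hy i hi)).
  by move=> i hi h; rewrite /DB h hE.
case: (eqVneq x y0) => [e0|n0'].
  apply: (two y1 y2 d12); apply: hD; rewrite e0 //; by rewrite eq_sym.
case: (eqVneq x y1) => [e1|n1'].
  apply: (two y0 y2 d02); apply: hD; rewrite ?e1 //; by rewrite eq_sym.
exact: (two y0 y1 d01 (hD _ _ n0') (hD _ _ n1')).
Qed.


Definition zz (x y : 'I_n) i := (val x %% t ^ (k - i)) * t ^ i + val y %/ t ^ (k - i).

Lemma DB_path x y : forall i, i <= k -> forall v : 'I_n, val v = zz x y i -> within DB i x v.
Proof.
elim=> [|i IH] hi v hv.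
  rewrite /= ; apply/eqP; apply: val_inj; rewrite hv /zz subn0 expn0 muln1.
  by rewrite (modn_small (ltn_ord x)) (divn_small (ltn_ord y)) addn0.
have hw : zz x y i < n by apply: z_lt; [exact: t0 | lia | exact: ltn_ord].
pose w := Ordinal hw.
have IHw := IH (ltnW hi) w erefl.
have hE : E w v.
  rewrite /E hv /= /zz.
  have ej : k - i = (k - i.+1) + 1 by lia.
  have ei : k.-1 = (k - i.+1) + i by lia.
  rewrite ej ei -addn1.
  apply/eqP; apply: key_shift; first exact: t0.
  have -> : i + (k - (i + 1)) + 1 = k by lia.
  exact: ltn_ord.
rewrite /=; case: (eqVneq w v) => [<-|ne]; first by rewrite IHw.
apply/orP; right; apply/existsP; exists w; rewrite IHw /= /uadj /DB ne hE.
by [].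
Qed.

Lemma DB_within x y : within DB k x y.
Proof.
apply: (@DB_path x y k (leqnn k)); rewrite /zz subnn expn0 modn1 mul0n add0n divn1.
by [].
Qed.

Lemma k_lt_n : k < n. Proof. apply: ltn_expl; lia. Qed.

Lemma k_le_n2 : k <= n ^ 2.
Proof. apply: leq_trans (ltnW k_lt_n) _; rewrite expnS expn1 leq_pmulr //; exact: n0. Qed.


Hypothesis hgeo : (2 * t) ^ k - 1 < t ^ k * (2 * t - 1).

Lemma far (a : rel 'I_n) u : #|nb a u| <= 2 * t -> (forall z, #|nb a z| <= (2 * t).+1) ->
  exists v, k <= dist a u v.
Proof.
move=> hu hz.
have hb := ball_bound hu hz k.-1; rewrite prednK // in hb.
have hs := geom_lt t0 hgeo.
case: (pickP (fun v => v \notin ball a u k.-1)) => [v hv|hn].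
  exists v; apply: dist_ge => //; first exact: k_le_n2.
  by rewrite inE in hv.
have : [set: 'I_n] \subset ball a u k.-1.
  by apply/subsetP => v _; have := hn v => /negbFE.
move/subset_leq_card; rewrite cardsT card_ord => h.
by have := leq_trans h hb; rewrite leqNgt hs.
Qed.

Lemma DB_nb z : #|nb DB z| <= 2 * t.
Proof.
apply: leq_trans (DB_deg z); apply: subset_leq_card; apply/subsetP => y.
by rewrite !inE uadj_DB.
Qed.

Lemma DB_diam : diameter DB = k.
Proof.
apply/eqP; rewrite eqn_leq; apply/andP; split.
  apply/bigmax_leqP => x _; apply/bigmax_leqP => y _.
  apply: dist_le; [exact: DB_within | exact: k_lt_n].
pose x0 := Ordinal n0.
have [v hv] := @far DB x0 (DB_nb x0) (fun z => leq_trans (DB_nb z) (leqnSn _)).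
apply: leq_trans hv _; apply: leq_trans (leq_bigmax x0); exact: (leq_bigmax v).
Qed.


Lemma DB_eq (G : rel 'I_n) : underlying_is G DB -> MAX_equilibrium G.
Proof.
move=> hU.
have hG : forall x y, uadj G x y = DB x y.
  move=> x y; have [h _] := hU x y; rewrite /uadj; move: h.
  by case: (G x y); case: (G y x); case: (DB x y).
have hW : forall r x y, within G r x y = within DB r x y.
  by apply: within_ext => x y; rewrite hG uadj_DB.
split.
  move=> x; exact: ((hU x x).2 (eqxx x)).
move=> u S uS hS.
have hcomp : ncomp G = 1.
  rewrite /ncomp.
  have -> : [set [set y | within G n x y] | x : 'I_n] = [set setT].
    apply/setP => A; rewrite inE; apply/imsetP/eqP => [[x _ ->]|->].
      apply/setP => y; rewrite !inE hW; exact: within_mono (DB_within x y) (ltnW k_lt_n).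
    exists (Ordinal n0) => //; apply/setP => y; rewrite !inE hW.
    by rewrite (within_mono (DB_within _ y) (ltnW k_lt_n)).
  by rewrite cards1.
have hle : cMAX G u <= k.
  rewrite /cMAX hcomp subnn mul0n addn0; apply/bigmax_leqP => v _.
  apply: dist_le; [by rewrite hW; exact: DB_within | exact: k_lt_n].
apply: leq_trans hle _.
set G' := deviate G u S.
have hdu : #|nb G' u| <= 2 * t.
  have hsub : nb G' u \subset S :|: [set y | G y u].
    apply/subsetP => y; rewrite !inE /uadj /G' /deviate eqxx.
    by case: (eqVneq y u) => [->|yu]; rewrite ?eqxx ?(negbTE uS) //=.
  apply: leq_trans (subset_leq_card hsub) _.
  apply: leq_trans (leq_card_setU _ _) _.
  rewrite hS /outdeg -cardsUI.
  have -> : [set v | G u v] :&: [set y | G y u] = set0.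
    apply/setP => y; rewrite !inE; have [h _] := hU u y; move: h.
    by case: (G u y); case: (G y u); case: (DB u y).
  rewrite cards0 addn0; apply: leq_trans (DB_deg u); apply: subset_leq_card.
  by apply/subsetP => y; rewrite !inE -hG /uadj.
have hdz : forall z, #|nb G' z| <= (2 * t).+1.
  move=> z; case: (eqVneq z u) => [->|zu]; first exact: leq_trans hdu (leqnSn _).
  have hsub : nb G' z \subset u |: [set y | DB z y].
    apply/subsetP => y; rewrite !inE /uadj /G' /deviate (negbTE zu) -hG /uadj.
    by case: ifP => [/eqP -> |_].
  apply: leq_trans (subset_leq_card hsub) _; rewrite cardsU1.
  have := DB_deg z; case: (u \notin _) => /=; lia.
have [v hv] := far hdu hdz.
rewrite /cMAX; apply: leq_trans (leq_addr _ _); exact: leq_trans hv (leq_bigmax v).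
Qed.

End DB.

Theorem mainTheorem15 (t k : nat) :
  3 < t -> 3 < k -> (2 * t) ^ k - 1 < t ^ k * (2 * t - 1) ->
  exists U : rel 'I_(t ^ k),
    [/\ simple_graph U, min_degree_ge U 2, diameter U = k &
        forall G : rel 'I_(t ^ k), underlying_is G U -> MAX_equilibrium G].
Proof.
move=> t3 k3 hg.
have k0 : 0 < k by lia.
exists (@DB t k); split.
- exact: DB_simple.
- exact: (DB_mindeg t3 k0).
- exact: (DB_diam t3 k0 hg).
- exact: (DB_eq t3 k0 hg).
Qed.
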